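(* Consider a chore division instance satisfying Conditions 1 and 2. For every normalized price vector $p\in P$ and every $k\in[d]$, $\sum_{j\in B_k}p_j>0$.
   Context: Instance: agents $[n]$, chores $[m]$, disutility $d$, endowments $w_{i,j}\ge0$ (amount of chore $j$ owned by agent $i$), threshold $\tau$. The disutility graph $D$ is the bipartite graph with edge $\{i,j\}$ iff $d(i,j)<\tau$. Condition 1: $D$ is a disjoint union of complete bipartite graphs $D_1,\dots,D_d$ (its components), $D_k$ with agent set $A_k$ and chore set $B_k$. The exchange graph is the directed graph $W$ on $[d]$ with arc $(k,k')$ iff for every chore $b\in B_{k'}$ there is an agent $a\in A_k$ with $w_{a,b}>0$. Condition 2: $W$ is strongly connected. A normalized price vector is $p\in\mathbb{R}^m$ with $p_j\ge0$, $\sum_{j}p_j=1$, and $\sum_{i\in A_k}\sum_{j\in[m]}w_{i,j}p_j=\sum_{j\in B_k}p_j$ for every $k\in[d]$; $P$ is the set of such vectors. *)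

(* Defs.v *)
From HB Require Import structures.
From mathcomp Require Import all_boot all_order all_algebra.
Set Implicit Arguments. Unset Strict Implicit. Unset Printing Implicit Defensive.
Import Order.TTheory GRing.Theory Num.Theory.
Local Open Scope ring_scope.

Definition disutility_graph (R : realFieldType) (n m : nat)
  (dis : 'I_n -> 'I_m -> R) (tau : R) : 'I_n -> 'I_m -> bool :=
  fun i j => dis i j < tau.

(* Condition 1: the bipartite graph D (agents 'I_n, chores 'I_m) is the
   disjoint union of the complete bipartite graphs D_k (k < dd) with agent
   set A k and chore set B k, and these are its connected components:
   - the A k partition the agents, the B k partition the chores;
   - {i,j} is an edge of D iff i \in A k and j \in B k for some k;
   - each D_k is connected: either both sides are nonempty (complete
     bipartite, hence connected) or it is a single isolated vertex. *)
Definition component_decomposition (n m : nat) (D : 'I_n -> 'I_m -> bool)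
  (dd : nat) (A : 'I_dd -> {set 'I_n}) (B : 'I_dd -> {set 'I_m}) : Prop :=
  [/\ (forall i : 'I_n, #|[set k | i \in A k]| = 1%N),
      (forall j : 'I_m, #|[set k | j \in B k]| = 1%N),
      (forall i j, D i j = [exists k, (i \in A k) && (j \in B k)])
    & (forall k, ((A k != set0) && (B k != set0)) || (#|A k| + #|B k| == 1)%N)].

Definition exchange_arc (R : realFieldType) (n m dd : nat)
  (w : 'I_n -> 'I_m -> R) (A : 'I_dd -> {set 'I_n}) (B : 'I_dd -> {set 'I_m})
  : rel 'I_dd :=
  fun k k' => [forall b in B k', exists a in A k, 0 < w a b].

Definition strongly_connected (dd : nat) (e : rel 'I_dd) : Prop :=
  forall k k' : 'I_dd, connect e k k'.

Definition normalized_price (R : realFieldType) (n m dd : nat)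
  (w : 'I_n -> 'I_m -> R) (A : 'I_dd -> {set 'I_n}) (B : 'I_dd -> {set 'I_m})
  (p : 'I_m -> R) : Prop :=
  [/\ (forall j, 0 <= p j),
      \sum_(j < m) p j = 1
    & (forall k, \sum_(i in A k) \sum_(j < m) w i j * p j = \sum_(j in B k) p j)].

(* Main.v *)
Require Import Defs.
From HB Require Import structures.
From mathcomp Require Import all_boot all_order all_algebra.
Import Order.TTheory GRing.Theory Num.Theory.
Local Open Scope ring_scope.

Theorem mainTheorem9 (R : realFieldType) (n m : nat)
  (dis : 'I_n -> 'I_m -> R) (w : 'I_n -> 'I_m -> R) (tau : R)
  (dd : nat) (A : 'I_dd -> {set 'I_n}) (B : 'I_dd -> {set 'I_m}) :
  (forall i j, 0 <= w i j) ->
  component_decomposition (disutility_graph dis tau) A B ->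
  strongly_connected (exchange_arc w A B) ->
  forall p : 'I_m -> R, normalized_price w A B p ->
  forall k : 'I_dd, 0 < \sum_(j in B k) p j.
Proof.
move=> w0 [cA cB _ _] sc p [p0 p1 bal] k.
have S0 : forall k, 0 <= \sum_(j in B k) p j by move=> k0; apply: sumr_ge0.
rewrite lt_neqAle S0 andbT eq_sym; apply/negP => /eqP Sk.
have step : forall k1 k2, \sum_(j in B k1) p j = 0 ->
    exchange_arc w A B k1 k2 -> \sum_(j in B k2) p j = 0.
  move=> k1 k2 Z /forall_inP arc.
  rewrite -bal in Z.
  have Z1 := psumr_eq0P (fun i _ => sumr_ge0 _ (fun j _ => mulr_ge0 (w0 i j) (p0 j))) Z.
  apply: big1 => b bB.
  have /exists_inP [a aA wab] := arc b bB.
  have Z2 := psumr_eq0P (fun j _ => mulr_ge0 (w0 a j) (p0 j)) (Z1 a aA).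
  have := Z2 b isT; move/eqP; rewrite mulf_eq0 => /orP [/eqP h|/eqP //].
  by move: wab; rewrite h ltxx.
have all0 : forall k', \sum_(j in B k') p j = 0.
  move=> k'; have /connectP [s pth ->] := sc k k'.
  elim: s k Sk pth => [|x s IH] k1 Z1 //= /andP [a pth].
  exact: IH (step _ _ Z1 a) pth.
have pj0 : forall j, p j = 0.
  move=> j.
  have : (0 < #|[set k | j \in B k]|)%N by rewrite cB.
  rewrite card_gt0 => /set0Pn [k' ]; rewrite inE => jB.
  exact: (psumr_eq0P (fun j _ => p0 j) (all0 k')) j jB.
move: p1; rewrite big1 // => /eqP; by rewrite eq_sym oner_eq0.
Qed.
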